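(* Let $A\in\mathbb{R}^{n\times n}$, $B\in\mathbb{R}^{n\times p}$ with $(A,B)$ controllable, let $P$ be a positive definite matrix such that for some $\epsilon>0$, $(x-y)^TP\{A(x-y)-P^{-1}BB^T(x-y)\}\le-\epsilon(x-y)^T(x-y)$ for all $x,y$. Let $L=(l_{ij})\in\mathbb{R}^{m\times m}$ be irreducible with $\mathrm{Rank}(L)=m-1$, $l_{ij}\ge0$ for $i\ne j$, $\sum_jl_{ij}=0$, let $\varepsilon>0$, and let $s(t)$ satisfy $\dot s(t)=As(t)$. Consider $$\frac{dx_1(t)}{dt}=Ax_1(t)+c\sum_{j=1}^ml_{1j}P^{-1}BB^Tx_j(t)-c\varepsilon(x_1(t)-s(t)),$$ $$\frac{dx_i(t)}{dt}=Ax_i(t)+c\sum_{j=1}^ml_{ij}P^{-1}BB^Tx_j(t),\qquad i=2,\dots,m.$$ Then for sufficiently large constant $c$ the system reaches consensus to the trajectory $s(t)$, i.e. $x_i(t)-s(t)\to0$ for all $i$. *)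

(* Defs.v *)
From HB Require Import structures.
From mathcomp Require Import all_boot all_order all_algebra.
From mathcomp Require Import all_classical all_reals all_analysis.
Set Implicit Arguments. Unset Strict Implicit. Unset Printing Implicit Defensive.
Import Order.TTheory GRing.Theory Num.Theory.
Import numFieldNormedType.Exports.
Local Open Scope ring_scope.

Definition controllable (R : fieldType) (n p : nat)
    (A : 'M[R]_n) (B : 'M[R]_(n, p)) : Prop :=
  \rank (\mxrow_(k < n) (A ^+ k *m B)) = n.

Definition posdef (R : numFieldType) (n : nat) (P : 'M[R]_n) : Prop :=
  P^T = P /\ forall x : 'cV[R]_n, x != 0 -> 0 < (x^T *m P *m x) ord0 ord0.

Definition reducible (R : pzRingType) (m : nat) (L : 'M[R]_m) : Prop :=
  exists S : {set 'I_m}, [/\ S != finset.set0, S != [set: 'I_m] &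
    forall i j, i \in S -> j \notin S -> L i j = 0].
Definition irreducible_mx (R : pzRingType) (m : nat) (L : 'M[R]_m) : Prop :=
  ~ reducible L.

(* Main.v *)
Require Import Defs.
From HB Require Import structures.
From mathcomp Require Import all_boot all_order all_algebra.
From mathcomp Require Import all_classical all_reals all_analysis.
From mathcomp Require Import ring lra.
Import Order.TTheory GRing.Theory Num.Theory.
Import numFieldNormedType.Exports.
Local Open Scope ring_scope.

Definition qf {R : realType} {n} (M : 'M[R]_n) (u v : 'cV[R]_n) : R := (u^T *m M *m v) 0 0.
Definition sq {R : realType} {n} (u : 'cV[R]_n) : R := (u^T *m u) 0 0.
Definition mxabs {R : realType} {n} (M : 'M[R]_n) : R := \sum_k \sum_l `|M k l|.

Lemma qfE {R : realType} {n} (M : 'M[R]_n) u v :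
  qf M u v = \sum_k \sum_l u k 0 * M k l * v l 0.
Proof.
rewrite /qf mxE; under eq_bigr do rewrite mxE big_distrl /=.
rewrite exchange_big /=; apply: eq_bigr => k _; apply: eq_bigr => l _.
by rewrite !mxE.
Qed.

Lemma sqE {R : realType} {n} (u : 'cV[R]_n) : sq u = \sum_k u k 0 ^+ 2.
Proof. by rewrite /sq mxE; apply: eq_bigr => k _; rewrite !mxE expr2. Qed.

Lemma sq_ge0 {R : realType} {n} (u : 'cV[R]_n) : 0 <= sq u.
Proof. by rewrite sqE; apply: sumr_ge0 => k _; rewrite sqr_ge0. Qed.

Lemma entry_le_sq {R : realType} {n} (u : 'cV[R]_n) k : u k 0 ^+ 2 <= sq u.
Proof.
rewrite sqE (bigD1 k) //= lerDl sumr_ge0 // => i _; exact: sqr_ge0.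
Qed.

Lemma mxabs_ge0 {R : realType} {n} (M : 'M[R]_n) : 0 <= mxabs M.
Proof. by apply: sumr_ge0 => k _; apply: sumr_ge0. Qed.

Lemma qf_le {R : realType} {n} (M : 'M[R]_n) v : qf M v v <= mxabs M * sq v.
Proof.
rewrite qfE /mxabs big_distrl /=; apply: ler_sum => k _.
rewrite big_distrl /=; apply: ler_sum => l _.
have h1 := entry_le_sq v k; have h2 := entry_le_sq v l.
have hkl : v k 0 * v l 0 <= sq v.
  have : 0 <= (v k 0 - v l 0) ^+ 2 by apply: sqr_ge0.
  have : 0 <= (v k 0 + v l 0) ^+ 2 by apply: sqr_ge0.
  nra.
have hkl' : - (v k 0 * v l 0) <= sq v.
  have : 0 <= (v k 0 + v l 0) ^+ 2 by apply: sqr_ge0.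
  nra.
have hM : 0 <= `|M k l| by [].
case: (lerP 0 (M k l)) => hm.
- rewrite (ger0_norm hm). rewrite -mulrA [M k l * _]mulrC mulrA. 
  rewrite [X in X <= _]mulrC; apply: ler_wpM2l => //.
- rewrite (ltr0_norm hm).
  have -> : v k 0 * M k l * v l 0 = (- M k l) * (- (v k 0 * v l 0)) by rewrite mulrNN mulrAC mulrC mulrA.
  by apply: ler_wpM2l => //; rewrite oppr_ge0 ltW.
Qed.

Lemma qfDl {R : realType} {n} (M : 'M[R]_n) u v w : qf M (u + v) w = qf M u w + qf M v w.
Proof. by rewrite /qf linearD /= !mulmxDl mxE. Qed.
Lemma qfDr {R : realType} {n} (M : 'M[R]_n) u v w : qf M w (u + v) = qf M w u + qf M w v.
Proof. by rewrite /qf mulmxDr mxE. Qed.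
Lemma qfZl {R : realType} {n} (M : 'M[R]_n) a u w : qf M (a *: u) w = a * qf M u w.
Proof. by rewrite /qf linearZ /= -!scalemxAl mxE. Qed.
Lemma qfZr {R : realType} {n} (M : 'M[R]_n) a u w : qf M w (a *: u) = a * qf M w u.
Proof. by rewrite /qf -!scalemxAr mxE. Qed.
Lemma qfNl {R : realType} {n} (M : 'M[R]_n) u w : qf M (- u) w = - qf M u w.
Proof. by rewrite -scaleN1r qfZl mulN1r. Qed.
Lemma qfNr {R : realType} {n} (M : 'M[R]_n) u w : qf M w (- u) = - qf M w u.
Proof. by rewrite -scaleN1r qfZr mulN1r. Qed.
Lemma qfBl {R : realType} {n} (M : 'M[R]_n) u v w : qf M (u - v) w = qf M u w - qf M v w.
Proof. by rewrite qfDl qfNl. Qed.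
Lemma qfBr {R : realType} {n} (M : 'M[R]_n) u v w : qf M w (u - v) = qf M w u - qf M w v.
Proof. by rewrite qfDr qfNr. Qed.
Lemma qf_sym {R : realType} {n} (M : 'M[R]_n) u v : M^T = M -> qf M u v = qf M v u.
Proof.
move=> hM; rewrite /qf -[in LHS](trmxK (u^T *m M *m v)) [in LHS]mxE.
by rewrite !trmx_mul trmxK hM mulmxA.
Qed.
Lemma qf_sumr {R : realType} {n} (M : 'M[R]_n) m (F : 'I_m -> 'cV[R]_n) u :
  qf M u (\sum_(j < m) F j) = \sum_(j < m) qf M u (F j).
Proof.
elim/big_rec2: _ => [|j y1 y2 _ <-]; last by rewrite qfDr.
by rewrite /qf mulmx0 mxE.
Qed.

Lemma posdef_unit {R : realType} {n} (P : 'M[R]_n) : posdef P -> P \in unitmx.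
Proof.
move=> [hs hp]; rewrite unitmxE unitfE; apply/negP => /det0P [v vn0 vP].
have := hp v^T; rewrite trmx_eq0 => /(_ vn0).
by rewrite trmxK vP mul0mx mxE ltxx.
Qed.

Lemma posdef_ge0 {R : realType} {n} (P : 'M[R]_n) v : posdef P -> 0 <= qf P v v.
Proof.
move=> [_ hp]; have [->|vn0] := eqVneq v 0; last exact/ltW/hp.
by rewrite /qf mulmx0 mxE.
Qed.

Lemma cauchy_schwarz {R : realType} {n} (P : 'M[R]_n) u w : posdef P ->
  qf P u w ^+ 2 <= qf P u u * qf P w w.
Proof.
move=> hP; have [hs hp] := hP.
have [->|wn0] := eqVneq w 0.
  by rewrite /qf !mulmx0 !mxE expr0n /= mulr0.
have ha := hp w wn0. rewrite -/(qf P w w) in ha.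
set a := qf P w w in ha *; set b := qf P u w; set c := qf P u u.
have := posdef_ge0 P (u - (b / a) *: w) hP.
rewrite qfBl !qfBr !qfZl !qfZr (qf_sym P w u hs) -/a -/b -/c.
move=> h.
have e : c - b / a * b - (b / a * b - b / a * (b / a * a)) = c - b ^+ 2 / a.
  by field; rewrite gt_eqF.
rewrite e subr_ge0 ler_pdivrMr // in h.
Qed.

Lemma posdef_lower {R : realType} {n} (P : 'M[R]_n) : posdef P ->
  exists k : R, 0 <= k /\ forall v, sq v <= k * qf P v v.
Proof.
move=> hP; have hu := posdef_unit P hP; have [hs hp] := hP.
exists (mxabs (invmx P)); split; first exact: mxabs_ge0.
move=> v; set w := invmx P *m v.
have e1 : qf P v w = sq v by rewrite /qf /w mulmxA -[v^T *m P *m invmx P]mulmxA mulmxV // mulmx1.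
have e2 : qf P w w = qf (invmx P) v v.
  rewrite /qf /w trmx_mul trmx_inv hs -[v^T *m invmx P *m P]mulmxA mulVmx //.
  by rewrite mulmx1 mulmxA.
have cs := cauchy_schwarz P v w hP.
rewrite e1 e2 in cs.
have ub := qf_le (invmx P) v.
have q0 := posdef_ge0 P v hP.
have s0 := sq_ge0 v.
have k0 := mxabs_ge0 (invmx P).
set k := mxabs (invmx P) in ub k0 *.
set s := sq v in cs ub s0 *; set q := qf P v v in cs q0 *.
have : s ^+ 2 <= q * (k * s) by apply: (le_trans cs); apply: ler_wpM2l.
case: (ltrP 0 s) => hs0; last by move=> _; apply: (le_trans hs0); apply: mulr_ge0.
move=> h; rewrite -(ler_pM2r hs0); rewrite expr2 mulrA [q * k]mulrC in h.
exact: h.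
Qed.

Lemma norm_lt_of_sq {R : realType} {n} (v : 'cV[R]_n) (e : R) : 0 < e -> sq v < e ^+ 2 -> `|v| < e.
Proof.
move=> e0 hv; rewrite /Num.Def.normr /= mx_normrE; apply: bigmax_lt => // -[k j] _ /=.
rewrite ord1; have h := entry_le_sq v k.
rewrite -(ltr_pXn2r (n:=2)) //; rewrite ?nnegrE ?normr_ge0 ?ltW //.
by rewrite real_normK ?num_real //; apply: le_lt_trans hv.
Qed.

Lemma perron {R : realType} m (L : 'M[R]_m) : (0 < m)%N -> irreducible_mx L ->
  \rank L = (m - 1)%N -> (forall i j : 'I_m, i != j -> 0 <= L i j) ->
  (forall i : 'I_m, \sum_(j < m) L i j = 0) ->
  exists xi : 'I_m -> R, (forall i, 0 < xi i) /\ (forall j, \sum_i xi i * L i j = 0).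
Proof.
move=> m0 irr rk Lnn Lrow.
have rk1 : \rank (kermx L) = 1%N by rewrite mxrank_ker rk subKn.
have [r hr] : exists r, row r (kermx L) != 0.
  apply/not_existsP => h; move: rk1; suff -> : kermx L = 0 by rewrite mxrank0.
  by apply/row_matrixP => r; rewrite row0; apply/eqP/negPn/negP/h.
set u := row r (kermx L) in hr.
have uL : u *m L = 0 by rewrite /u -row_mul mulmx_ker row0.
have uLj : forall j, \sum_i u 0 i * L i j = 0.
  by move=> j; have := congr1 (fun M : 'rV[R]_m => M 0 j) uL; rewrite !mxE.
set v := fun i => `|u 0 i|.
have Ldiag : forall j, L j j <= 0.
  move=> j; have := Lrow j; rewrite (bigD1 j) //= => /eqP; rewrite addr_eq0 => /eqP ->.
  by rewrite oppr_le0; apply: sumr_ge0 => i hi; apply: Lnn; rewrite eq_sym.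
have vge : forall j, 0 <= \sum_i v i * L i j.
  move=> j; rewrite (bigD1 j) //=.
  have := uLj j; rewrite (bigD1 j) //= => /eqP; rewrite addr_eq0 => /eqP h.
  have : `|u 0 j * L j j| <= \sum_(i < m | i != j) v i * L i j.
    rewrite h normrN; apply: le_trans (ler_norm_sum _ _ _) _.
    apply: ler_sum => i hi; rewrite normrM /v (ger0_norm (Lnn _ _ hi)) //.
  rewrite normrM (ler0_norm (Ldiag j)) -/(v j) => h2.
  by rewrite mulrN -subr_ge0 opprK addrC in h2.
have vsum : \sum_j \sum_i v i * L i j = 0.
  rewrite exchange_big /=; apply: big1 => i _; rewrite -big_distrr /= Lrow.
  by rewrite mulr0.
have veq : forall j, \sum_i v i * L i j = 0.
  move=> j; move/psumr_eq0P: vsum => /(_ (fun j _ => vge j)); exact.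
exists v; split => //.
have [i0 hi0] : exists i, u 0 i != 0.
  apply/not_existsP => h; move/eqP: hr; apply; apply/rowP => i.
  rewrite [RHS]mxE; apply/eqP/negPn/negP; exact: h.
move=> i; rewrite /v normr_gt0; apply/negP => /eqP ui.
apply: irr; exists [set k | u 0 k != 0]; split.
- by apply/set0Pn; exists i0; rewrite inE.
- by apply/eqP => /setP /(_ i); rewrite !inE ui eqxx.
move=> k j; rewrite !inE => hk /negPn /eqP hj.
have kj : k != j by apply: contraNneq hk => ->; rewrite hj.
have := veq j; rewrite (bigD1 j) //= /v hj normr0 mul0r add0r.
move/psumr_eq0P => /(_ (fun l hl => mulr_ge0 (normr_ge0 _) (Lnn _ _ hl))) /(_ k kj).
by move/eqP; rewrite mulf_eq0 normr_eq0 (negbTE hk) /= => /eqP.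
Qed.

Lemma reach {R : realType} m (L : 'M[R]_m) (T : Type) (N : T -> 'I_m -> R)
  (D : T -> 'I_m -> 'I_m -> R) (W : T -> R) (i0 : 'I_m) :
  irreducible_mx L -> (forall i j, i != j -> 0 <= L i j) ->
  (exists K, forall e, N e i0 <= K * W e) ->
  (forall e i j, N e i <= 2 * D e i j + 2 * N e j) ->
  (forall i j, i != j -> 0 < L i j -> exists K, forall e, D e i j <= K * W e) ->
  (forall e, 0 <= W e) ->
  exists K, forall e i, N e i <= K * W e.
Proof.
move=> irr Lnn base tri stepD W0.
pose Pr i := exists K, forall e, N e i <= K * W e.
have allP : forall i, Pr i.
  apply: contrapT => /existsNP [i1 ni1].
  apply: irr; exists [set i | ~~ `[< Pr i >]]; split.
  - by apply/set0Pn; exists i1; rewrite inE; apply/negP => /asboolP.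
  - apply/eqP => /setP /(_ i0); rewrite !inE => /negP; apply; exact/asboolP.
  move=> i j; rewrite !inE => /negP hi /negPn /asboolP [Kj hKj].
  have ij : i != j by apply: contra_not_neq hi => ->; apply/asboolP; exists Kj.
  apply/eqP/negPn/negP => Lij.
  have Lpos : 0 < L i j by rewrite lt_neqAle eq_sym Lij Lnn.
  have [K1 hK1] := stepD i j ij Lpos.
  apply: hi; apply/asboolP; exists (2 * K1 + 2 * Kj) => e.
  apply: (le_trans (tri e i j)); rewrite [X in _ <= X]mulrDl; apply: lerD; rewrite -mulrA; apply: ler_wpM2l => //.
have [Kf hKf] := choice allP.
exists (\sum_i `|Kf i|) => e i.
apply: (le_trans (hKf i e)); apply: ler_wpM2r => //.
apply: le_trans (ler_norm _) _.
by rewrite (bigD1 i) //= lerDl; apply: sumr_ge0.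
Qed.
Local Open Scope classical_set_scope.

Lemma mvt_le {R : realType} {V : R -> R} {a b : R} : a <= b ->
  (forall t, derivable V t 1) -> exists2 c, a <= c <= b & V b - V a = derive1 V c * (b - a).
Proof.
move=> ab dV; case: (ltrP a b) => hab; last first.
  have -> : b = a by apply/eqP; rewrite eq_le ab hab.
  by exists a; rewrite ?lexx // !subrr mulr0.
have hd : forall x, x \in `]a, b[%R -> is_derive x 1 V (derive1 V x).
  by move=> x _; rewrite derive1E; apply: derivableP.
have hc : {within `[a, b], continuous V}.
  apply: continuous_subspaceT => x.
  exact/differentiable_continuous/derivable1_diffP.
have [c hc' e] := MVT hab hd hc.
exists c => //; move: hc'; rewrite in_itv /= => /andP[h1 h2].
by rewrite !ltW.
Qed.

Lemma decay {R : realType} (V : R -> R) (d : R) : 0 < d ->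
  (forall t, derivable V t 1) -> (forall t, 0 <= V t) ->
  (forall t, derive1 V t <= - d * V t) -> V @ +oo --> 0.
Proof.
move=> d0 dV V0 dle.
have nincr : forall x y, x <= y -> V y <= V x.
  move=> x y xy; have [c _ e] := mvt_le xy dV.
  rewrite -subr_le0 e; apply: mulr_le0_ge0; last by rewrite subr_ge0.
  apply: (le_trans (dle c)); rewrite mulNr oppr_le0; exact: mulr_ge0 (ltW d0) (V0 c).
have small : forall eps, 0 < eps -> exists T, V T < eps.
  move=> eps e0; apply: contrapT => /forallNP h.
  have hge : forall t, eps <= V t by move=> t; rewrite leNgt; apply/negP/h.
  set T := V 0 / (d * eps) + 1.
  have T0 : 0 <= T by rewrite addr_ge0 // divr_ge0 // mulr_ge0 // ltW.
  have [c _ e] := mvt_le T0 dV.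
  have : V T - V 0 <= - (d * eps) * T.
    rewrite e subr0; apply: ler_wpM2r => //.
    apply: (le_trans (dle c)); rewrite !mulNr lerN2; apply: ler_wpM2l => //; exact: ltW.
  have de0 : 0 < d * eps by apply: mulr_gt0.
  have eT : - (d * eps) * T = - V 0 - d * eps.
    by rewrite /T; field; rewrite (gt_eqF e0) (gt_eqF d0).
  rewrite eT; have := V0 T; lra.
apply/cvgr0Pnorm_lt => eps e0.
have [T hT] := small eps e0.
exists T; split; first exact: num_real.
move=> t Tt; rewrite ger0_norm //; apply: le_lt_trans (nincr _ _ (ltW Tt)) hT.
Qed.

Lemma is_derive_sumf {R : realType} n (h : 'I_n -> R -> R) (t : R) (dh : 'I_n -> R) :
  (forall i, is_derive t 1 (h i) (dh i)) ->
  is_derive t 1 (fun u => \sum_i h i u) (\sum_i dh i).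
Proof. by move=> H; rewrite -fct_sumE; apply: is_derive_sum. Qed.

Lemma is_derive_entry {R : realType} {m n} (f : R -> 'M[R]_(m, n)) t i j :
  derivable f t 1 -> is_derive t 1 (fun u => f u i j) (derive1 f t i j).
Proof.
move=> df; rewrite derive1E derive_mx // mxE.
by apply: derivableP; move/derivable_mxP: df; apply.
Qed.

Lemma qf_derive {R : realType} {n} (M : 'M[R]_n) (f g : R -> 'cV[R]_n) t :
  derivable f t 1 -> derivable g t 1 ->
  is_derive t 1 (fun u => qf M (f u) (g u))
    (qf M (derive1 f t) (g t) + qf M (f t) (derive1 g t)).
Proof.
move=> df dg.
have -> : (fun u => qf M (f u) (g u)) =
  (fun u => \sum_k \sum_l (fun u => f u k 0 * M k l * g u l 0) u).
  by apply: funext => u; rewrite qfE.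
rewrite !qfE -big_split /=.
apply: is_derive_sumf => k; rewrite -big_split /=; apply: is_derive_sumf => l.
have hf := is_derive_entry _ _ k 0 df; have hg := is_derive_entry _ _ l 0 dg.
have -> : (fun u => f u k 0 * M k l * g u l 0) =
  ((fun u => f u k 0) * cst (M k l)) * (fun u => g u l 0).
  by apply: funext => u.
have h1 := is_deriveM hf (is_derive_cst (M k l) t 1).
have h2 := is_deriveM h1 hg.
apply: is_derive_eq h2 _.
rewrite /= /cst /= scaler0 add0r.
rewrite -![_ *: _]/(_ * _).
have -> : ((fun u => f u k 0) * (fun=> M k l)) t = f t k 0 * M k l by [].
ring.
Qed.

Lemma qf_sq_expand {R : realType} {n} (M : 'M[R]_n) (a b : 'cV[R]_n) (k : R) : M^T = M ->
  qf M (a - k *: b) (a - k *: b) = qf M a a - 2 * k * qf M a b + k ^+ 2 * qf M b b.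
Proof.
move=> hM; rewrite !qfBl !qfBr !qfZl !qfZr (qf_sym M b a hM).
by rewrite expr2; ring.
Qed.

Lemma qf_tri {R : realType} {n} (M : 'M[R]_n) (a b : 'cV[R]_n) : M^T = M ->
  (forall v, 0 <= qf M v v) ->
  qf M a a <= 2 * qf M (a - b) (a - b) + 2 * qf M b b.
Proof.
move=> hM hpsd; have := hpsd (a - 2 *: b).
rewrite qf_sq_expand //.
have e := qf_sq_expand M a b 1 hM; rewrite scale1r in e; rewrite e.
rewrite expr1n expr2 mulr1 mul1r; lra.
Qed.

Lemma qf0r {R : realType} {n} (M : 'M[R]_n) u : qf M u 0 = 0.
Proof. by rewrite /qf mulmx0 mxE. Qed.

Lemma qf0l {R : realType} {n} (M : 'M[R]_n) u : qf M 0 u = 0.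
Proof. by rewrite /qf trmx0 !mul0mx mxE. Qed.

Lemma le_sum_term {R : realType} (I : finType) (F : I -> R) i :
  (forall j, 0 <= F j) -> F i <= \sum_j F j.
Proof. by move=> h; rewrite (bigD1 i) //= lerDl sumr_ge0. Qed.

Lemma zmod_rearr (V : zmodType) (a b d s : V) : a + b - d - s = a - s + b - d.
Proof. by rewrite addrAC [a + b - s]addrAC. Qed.

Theorem proposition10 (R : realType) (n p m : nat)
  (A : 'M[R]_n) (B : 'M[R]_(n, p)) (P : 'M[R]_n) (L : 'M[R]_m)
  (veps : R) (s : R -> 'cV[R]_n) :
  controllable A B ->
  posdef P ->
  (exists eps : R, 0 < eps /\
     forall x y : 'cV[R]_n,
       ((x - y)^T *m P *m (A *m (x - y) - invmx P *m B *m B^T *m (x - y)))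
         ord0 ord0 <= - eps * ((x - y)^T *m (x - y)) ord0 ord0) ->
  (0 < m)%N ->
  irreducible_mx L ->
  \rank L = (m - 1)%N ->
  (forall i j : 'I_m, i != j -> 0 <= L i j) ->
  (forall i : 'I_m, \sum_(j < m) L i j = 0) ->
  0 < veps ->
  (forall t : R, derivable s t 1 /\ derive1 s t = A *m s t) ->
  exists c0 : R, forall c : R, c0 <= c ->
    forall x : 'I_m -> R -> 'cV[R]_n,
      (forall (i : 'I_m) (t : R),
         derivable (x i) t 1 /\
         derive1 (x i) t =
           A *m x i t
           + c *: (\sum_(j < m) L i j *: (invmx P *m B *m B^T *m x j t))
           - (if (nat_of_ord i == 0)%N then (c * veps) *: (x i t - s t)
              else 0)) ->
      forall i : 'I_m, (fun t => x i t - s t) @ +oo --> (0 : 'cV[R]_n).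
Proof.
move=> _ hP [eps [eps0 heps]] m0 irr rk Lnn Lrow veps0 hs.
have hu := posdef_unit P hP.
have [hPs _] := hP.
set K := invmx P *m B *m B^T.
set Q := B *m B^T.
have hQs : Q^T = Q by rewrite /Q trmx_mul trmxK.
have qPK : forall u v, qf P u (K *m v) = qf Q u v.
  move=> u v; rewrite /qf /K /Q !mulmxA -[u^T *m P *m invmx P]mulmxA mulmxV //.
  by rewrite mulmx1.
have hQ0 : forall v, 0 <= qf Q v v.
  move=> v; have -> : qf Q v v = sq (B^T *m v).
    by rewrite /qf /sq /Q trmx_mul trmxK !mulmxA.
  exact: sq_ge0.
have hQle : forall v, qf Q v v <= mxabs Q * sq v by move=> v; exact: qf_le.
have [xi [xi0 xiL]] := @perron R m L m0 irr rk Lnn Lrow.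
have [kap [kap0 hkap]] := posdef_lower P hP.
set i0 : 'I_m := Ordinal m0.
have hAe : forall v, qf P v (A *m v) <= qf Q v v - eps * sq v.
  move=> v; have := heps v 0; rewrite !subr0.
  change (qf P v (A *m v - K *m v) <= - eps * sq v -> qf P v (A *m v) <= qf Q v v - eps * sq v).
  rewrite qfBr qPK; lra.
pose D (e : 'I_m -> 'cV[R]_n) i j := qf Q (e i - e j) (e i - e j).
pose S (e : 'I_m -> 'cV[R]_n) := \sum_i \sum_j xi i * L i j * D e i j.
pose W (e : 'I_m -> 'cV[R]_n) := S e + qf P (e i0) (e i0).
have Dii : forall e i, D e i i = 0 by move=> e i; rewrite /D subrr qf0r.
have Dterm0 : forall e i j, 0 <= xi i * L i j * D e i j.
  move=> e i j; have [->|ij] := eqVneq i j; first by rewrite Dii mulr0.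
  by apply: mulr_ge0; [apply: mulr_ge0; [exact: ltW | exact: Lnn] | exact: hQ0].
have S0 : forall e, 0 <= S e.
  by move=> e; apply: sumr_ge0 => i _; apply: sumr_ge0 => j _; exact: Dterm0.
have W0 : forall e, 0 <= W e.
  by move=> e; apply: addr_ge0; [exact: S0 | exact: posdef_ge0].
have single : forall e i j, xi i * L i j * D e i j <= W e.
  move=> e i j; have hSW : S e <= W e by rewrite /W lerDl posdef_ge0.
  apply: (le_trans _ hSW).
  apply: (le_trans (y := \sum_j xi i * L i j * D e i j)).
    by rewrite (bigD1 j) //= lerDl; apply: sumr_ge0 => k _; exact: Dterm0.
  rewrite /S [X in _ <= X](bigD1 i) //= lerDl; apply: sumr_ge0 => k _.
  by apply: sumr_ge0 => j' _; exact: Dterm0.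
have [Kr hKr] : exists Kr, forall e i, qf Q (e i) (e i) <= Kr * W e.
  apply: (@reach R m L _ (fun e i => qf Q (e i) (e i)) D W i0 irr Lnn) => //.
  - exists (mxabs Q * kap) => e.
    apply: (le_trans (hQle _)); rewrite -mulrA; apply: ler_wpM2l; first exact: mxabs_ge0.
    apply: (le_trans (hkap _)); apply: ler_wpM2l => //.
    by rewrite /W lerDr S0.
  - by move=> e i j; apply: qf_tri.
  - move=> i j ij Lij; exists ((xi i * L i j)^-1) => e.
    by rewrite ler_pdivlMl ?mulr_gt0 // mulrA single.
set X := \sum_i xi i.
have X0 : 0 <= X by apply: sumr_ge0 => i _; exact: ltW.
set mu := Num.min 1 (2 * veps * xi i0).
have mu0 : 0 < mu.
  by rewrite lt_min ltr01 /= mulr_gt0 // mulr_gt0.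
have mu1 : mu <= 1 by rewrite ge_min lexx.
have mu2 : mu <= 2 * veps * xi i0 by rewrite ge_min lexx orbT.
exists (2 * X * `|Kr| / mu) => c hc x hx.
have c0 : 0 <= c.
  by apply: le_trans hc; rewrite divr_ge0 // ?mulr_ge0 // ltW.
have cmu : 2 * X * `|Kr| <= c * mu by rewrite -(ler_pdivrMr _ _ mu0).
have key : forall ee : 'I_m -> 'cV[R]_n,
  \sum_j xi j * qf P (ee j) (A *m ee j + c *: (\sum_k L j k *: (K *m ee k))
      - (if (nat_of_ord j == 0)%N then (c * veps) *: ee j else 0))
  <= - eps * \sum_j xi j * sq (ee j).
  move=> ee.
  pose N j := qf Q (ee j) (ee j).
  pose q j k := qf Q (ee j) (ee k).
  have e1 : forall j, qf P (ee j) (A *m ee j + c *: (\sum_k L j k *: (K *m ee k))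
      - (if (nat_of_ord j == 0)%N then (c * veps) *: ee j else 0))
      = qf P (ee j) (A *m ee j) + c * \sum_k L j k * q j k
        - (if (nat_of_ord j == 0)%N then c * veps * qf P (ee j) (ee j) else 0).
    move=> j; rewrite qfBr qfDr qfZr qf_sumr.
    congr (_ + _ * _ - _).
      by apply: eq_bigr => k _; rewrite qfZr qPK.
    by case: ifP => _; rewrite ?qfZr ?qf0r.
  under eq_bigr do rewrite e1.
  rewrite (eq_bigr (fun j => xi j * qf P (ee j) (A *m ee j)
     + c * (\sum_k xi j * L j k * q j k)
     - xi j * (if (nat_of_ord j == 0)%N then c * veps * qf P (ee j) (ee j) else 0))); last first.
    move=> j _; rewrite mulrBr mulrDr; congr (_ + _ - _).
    rewrite mulrCA; congr (c * _); rewrite big_distrr; apply: eq_bigr => k _.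
    by rewrite /= mulrA.
  rewrite sumrB big_split /= -big_distrr /=.
  have hPin : \sum_j xi j * (if (nat_of_ord j == 0)%N then c * veps * qf P (ee j) (ee j) else 0)
      = xi i0 * (c * veps * qf P (ee i0) (ee i0)).
    rewrite (bigD1 i0) //= big1 ?addr0 // => j hj.
    have -> : (nat_of_ord j == 0)%N = false.
      apply/negbTE; apply: contra hj => /eqP h; apply/eqP/val_inj; exact: h.
    by rewrite mulr0.
  rewrite hPin.
  have eD : forall j k, D ee j k = N j - 2 * q j k + N k.
    move=> j k; have := qf_sq_expand Q (ee j) (ee k) 1 hQs.
    by rewrite scale1r expr1n !mul1r mulr1.
  have hS : S ee = \sum_j \sum_k (xi j * L j k * N j) + \sum_j \sum_k (xi j * L j k * N k)
       - 2 * \sum_j \sum_k xi j * L j k * q j k.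
    rewrite /S big_distrr /= -big_split -sumrB /=; apply: eq_bigr => j _.
    rewrite big_distrr /= -big_split -sumrB /=; apply: eq_bigr => k _.
    rewrite eD; ring.
  have z1 : \sum_j \sum_k (xi j * L j k * N j) = 0.
    apply: big1 => j _; rewrite -big_distrl -big_distrr /= Lrow mulr0 mul0r //.
  have z2 : \sum_j \sum_k (xi j * L j k * N k) = 0.
    rewrite exchange_big; apply: big1 => k _; rewrite -big_distrl /= xiL mul0r //.
  rewrite z1 z2 add0r sub0r in hS.
  set Cr := \sum_j \sum_k xi j * L j k * q j k in hS *.
  set P00 := qf P (ee i0) (ee i0).
  set SN := \sum_j xi j * N j.
  set Ssq := \sum_j xi j * sq (ee j).
  have ha : \sum_j xi j * qf P (ee j) (A *m ee j) <= SN - eps * Ssq.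
    rewrite /SN /Ssq big_distrr -sumrB; apply: ler_sum => j _.
    rewrite /= mulrCA -mulrBr; apply: ler_wpM2l; first exact: ltW.
    exact: hAe.
  have hSN : SN <= X * `|Kr| * W ee.
    rewrite /X big_distrl big_distrl /=; apply: ler_sum => j _.
    rewrite -mulrA; apply: ler_wpM2l; first exact: ltW.
    apply: le_trans (hKr ee j) _; apply: ler_wpM2r; [exact: W0 | exact: ler_norm].
  have hSN2 : 2 * SN <= c * mu * W ee.
    apply: le_trans (_ : 2 * (X * `|Kr| * W ee) <= _).
      by rewrite ler_wpM2l.
    by rewrite !mulrA; apply: ler_wpM2r; [exact: W0 | exact: cmu].
  have hW : c * mu * W ee = c * mu * S ee + c * mu * P00 by rewrite /W mulrDr.
  have f2 : c * mu * S ee <= c * S ee.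
    by apply: ler_wpM2r; [exact: S0 | rewrite -[X in _ <= X]mulr1; apply: ler_wpM2l].
  have f3 : c * mu * P00 <= c * (2 * veps * xi i0) * P00.
    by apply: ler_wpM2r; [exact: posdef_ge0 | apply: ler_wpM2l].
  have hcS : c * S ee = - (2 * (c * Cr)) by rewrite hS mulrN mulrCA.
  have hPin2 : c * (2 * veps * xi i0) * P00 = 2 * (xi i0 * (c * veps * P00)) by ring.
  rewrite mulNr; move: ha hSN2 hW f2 f3 hcS hPin2.
  move: (\sum_j xi j * qf P (ee j) (A *m ee j)) (c * mu * W ee) (c * mu * S ee) (c * mu * P00)
    (c * S ee) (c * Cr) (c * (2 * veps * xi i0) * P00) (xi i0 * (c * veps * P00)) (eps * Ssq).
  move=> a1 a2 a3 a4 a5 a6 a7 a8 a9; lra.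
move=> i.
pose e j t := x j t - s t.
have de : forall j t, derivable (e j) t 1 /\ derive1 (e j) t =
    A *m e j t + c *: (\sum_k L j k *: (K *m e k t))
    - (if (nat_of_ord j == 0)%N then (c * veps) *: e j t else 0).
  move=> j t; have [dx ex] := hx j t; have [ds es] := hs t.
  have ee : e j = (x j - s) by [].
  split; first by rewrite ee; exact: derivableB.
  have -> : derive1 (e j) t = derive1 (x j) t - derive1 s t.
    by rewrite !derive1E ee; exact: deriveB.
  rewrite ex es.
  have hsum : \sum_k L j k *: (K *m x k t) = \sum_k L j k *: (K *m e k t).
    rewrite /e; under [RHS]eq_bigr do rewrite mulmxBr scalerBr.
    by rewrite sumrB -scaler_suml Lrow scale0r subr0.
  rewrite hsum /e mulmxBr; exact: zmod_rearr.
pose V (t : R) := \sum_j xi j * qf P (e j t) (e j t).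
have dVt : forall t : R, is_derive t 1 V
    (\sum_j xi j * (qf P (derive1 (e j) t) (e j t) + qf P (e j t) (derive1 (e j) t))).
  move=> t; apply: is_derive_sumf => j.
  have [dj _] := de j t.
  exact: (is_deriveZ (xi j) (qf_derive P (e j) (e j) t dj dj)).
have V0 : forall t, 0 <= V t.
  move=> t; apply: sumr_ge0 => j _; apply: mulr_ge0; [exact: ltW | exact: posdef_ge0].
set rho := mxabs P.
have rho0 : 0 <= rho := mxabs_ge0 P.
set dl := 2 * eps / (rho + 1).
have dl0 : 0 < dl by rewrite divr_gt0 ?mulr_gt0 // ltr_wpDl.
have Vcvg : V @ +oo --> 0.
  apply: (decay V dl dl0).
  - by move=> t; case: (dVt t).
  - exact: V0.
  move=> t; have dVt1 := dVt t; rewrite derive1E derive_val.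
  have -> : \sum_j xi j * (qf P (derive1 (e j) t) (e j t) + qf P (e j t) (derive1 (e j) t))
      = 2 * \sum_j xi j * qf P (e j t) (derive1 (e j) t).
    rewrite big_distrr /=; apply: eq_bigr => j _.
    by rewrite (qf_sym P (derive1 (e j) t) (e j t) hPs); ring.
  under eq_bigr do rewrite (proj2 (de _ t)).
  have hk := key (fun j => e j t).
  have hV : V t <= rho * \sum_j xi j * sq (e j t).
    rewrite /V big_distrr /=; apply: ler_sum => j _.
    by rewrite mulrCA; apply: ler_wpM2l; [exact: ltW | exact: qf_le].
  have Ssq0 : 0 <= \sum_j xi j * sq (e j t).
    by apply: sumr_ge0 => j _; apply: mulr_ge0; [exact: ltW | exact: sq_ge0].
  move: hk hV Ssq0; set Ssq := \sum_j xi j * sq (e j t); set VV := V t; set LHS := \sum_j _.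
  move=> hk hV Ssq0.
  have h1 : dl * VV <= dl * (rho * Ssq) by apply: ler_wpM2l => //; exact: ltW.
  have h2 : dl * (rho * Ssq) <= dl * ((rho + 1) * Ssq).
    by apply: ler_wpM2l; [exact: ltW | apply: ler_wpM2r => //; rewrite lerDl].
  have h3 : dl * ((rho + 1) * Ssq) = 2 * eps * Ssq.
    by rewrite /dl mulrA divfK // gt_eqF // ltr_wpDl.
  have h4 : 2 * eps * Ssq = 2 * (eps * Ssq) by rewrite mulrA.
  rewrite mulNr; move: hk h1 h2 h3 h4; rewrite mulNr.
  move: (dl * VV) (dl * (rho * Ssq)) (dl * ((rho + 1) * Ssq)) (eps * Ssq) (2 * eps * Ssq).
  move=> b1 b2 b3 b4 b5; lra.
apply/cvgr0Pnorm_lt => eps' e0.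
have pos : 0 < eps' ^+ 2 * xi i / (kap + 1).
  by rewrite divr_gt0 ?mulr_gt0 ?exprn_gt0 // ltr_wpDl.
move/cvgr0Pnorm_lt: Vcvg => /(_ _ pos).
apply: filterS => t hVt.
apply: norm_lt_of_sq => //.
change (sq (e i t) < eps' ^+ 2).
have hq : xi i * qf P (e i t) (e i t) <= V t.
  rewrite /V (bigD1 i) //= lerDl; apply: sumr_ge0 => j _.
  by apply: mulr_ge0; [exact: ltW | exact: posdef_ge0].
rewrite ger0_norm // in hVt.
have hs1 := hkap (e i t).
have q0 := posdef_ge0 P (e i t) hP.
set qq := qf P (e i t) (e i t) in hq hs1 q0.
have h1 : (kap + 1) * (xi i * qq) < eps' ^+ 2 * xi i.
  rewrite -ltr_pdivlMl ?ltr_wpDl //; apply: le_lt_trans hq _.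
  by rewrite mulrC.
have h2 : (kap + 1) * qq < eps' ^+ 2.
  by rewrite -(ltr_pM2l (xi0 i)) mulrCA [xi i * eps' ^+ 2]mulrC.
have h3 : kap * qq <= (kap + 1) * qq by rewrite mulrDl mul1r lerDl.
apply: le_lt_trans hs1 _; exact: le_lt_trans h3 h2.
Qed.
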